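(* Let $K$ be a field and let $f\colon\mathbb Z^k\to K$ be a hypergeometric term on $\mathbb Z^k$ that is not a zero divisor. Then for any finite sequence $\vec w_1,\dots,\vec w_n$ of vectors in $\mathbb Z^k$, the hypergeometric term $f^{\vec w_1}f^{\vec w_2}\cdots f^{\vec w_n}$ (pointwise product) is not a zero divisor.
   Context: $f^{\vec w}(\vec z)=f(\vec z+\vec w)$. A hypergeometric term on $\mathbb Z^k$ over $K$ is a function $f\colon\mathbb Z^k\to K$ such that for each $i\in\{1,\dots,k\}$ there are nonzero polynomials $A_i,B_i\in K[\vec z]$ with $A_i(\vec z)f(\vec z)=B_i(\vec z)f(\vec z+\vec e_i)$ for all $\vec z\in\mathbb Z^k$. A function $g\colon\mathbb Z^k\to K$ is a zero divisor if there is a nonzero polynomial $p$ with $p(\vec z)g(\vec z)=0$ for all $\vec z\in\mathbb Z^k$. *)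

(* Defs.v *)
From HB Require Import structures.
From mathcomp Require Import all_boot all_order all_algebra.
From mathcomp Require Import mpoly.
Set Implicit Arguments. Unset Strict Implicit. Unset Printing Implicit Defensive.
Import GRing.Theory.
Local Open Scope ring_scope.

Definition zvec (k : nat) := 'I_k -> int.

Definition zeval (K : fieldType) (k : nat) (p : {mpoly K[k]}) (z : zvec k) : K :=
  p.@[fun i => (z i)%:~R].

Definition zadd (k : nat) (z w : zvec k) : zvec k := fun i => z i + w i.

Definition zunit (k : nat) (i : 'I_k) : zvec k := fun j => (i == j)%:R.

Definition zshift (K : fieldType) (k : nat) (f : zvec k -> K) (w : zvec k) : zvec k -> K :=
  fun z => f (zadd z w).

Definition hypergeometric_term (K : fieldType) (k : nat) (f : zvec k -> K) : Prop :=
  forall i : 'I_k, exists A B : {mpoly K[k]},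
    A != 0 /\ B != 0 /\
    forall z : zvec k, zeval A z * f z = zeval B z * f (zadd z (zunit i)).

Definition zero_divisor (K : fieldType) (k : nat) (g : zvec k -> K) : Prop :=
  exists p : {mpoly K[k]}, p != 0 /\ forall z : zvec k, zeval p z * g z = 0.

Definition shift_prod (K : fieldType) (k : nat) (f : zvec k -> K) (ws : seq (zvec k))
  : zvec k -> K :=
  fun z => \prod_(w <- ws) zshift f w z.

(* Main.v *)
Require Import Defs.
From mathcomp Require Import all_boot all_order all_algebra.
From mathcomp Require Import mpoly.
From Stdlib Require Import FunctionalExtensionality.
Set Implicit Arguments. Unset Strict Implicit. Unset Printing Implicit Defensive.
Import GRing.Theory.
Local Open Scope ring_scope.

Section S.
Variables (K : fieldType) (k : nat).

Definition sh (u : zvec k) : k.-tuple {mpoly K[k]} :=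
  [tuple ('X_i + ((u i)%:~R)%:MP) | i < k].

Lemma zeval_sh (A : {mpoly K[k]}) u z : zeval (A \mPo sh u) z = zeval A (zadd z u).
Proof.
rewrite /zeval comp_mpoly_meval; apply: meval_eq => i.
by rewrite tnth_map tnth_ord_tuple mevalD mevalXU mevalC /zadd intrD.
Qed.

Lemma comp_comp (p : {mpoly K[k]}) (lq lr : k.-tuple {mpoly K[k]}) :
  (p \mPo lq) \mPo lr = p \mPo [tuple (tnth lq i \mPo lr) | i < k].
Proof.
rewrite (comp_mpolyE p lq) (comp_mpolyE p) raddf_sum /=; apply: eq_bigr => m _.
rewrite comp_mpolyZ rmorph_prod /=; congr (_ *: _); apply: eq_bigr => i _.
by rewrite rmorphXn /= tnth_map tnth_ord_tuple.
Qed.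

Lemma sh_inv (A : {mpoly K[k]}) u : (A \mPo sh u) \mPo sh (fun i => - u i) = A.
Proof.
rewrite comp_comp -[RHS]comp_mpoly_id; congr comp_mpoly.
apply: eq_from_tnth => i; rewrite !tnth_map !tnth_ord_tuple.
rewrite comp_mpolyD comp_mpolyC comp_mpolyXU -tnth_nth tnth_map tnth_ord_tuple.
by rewrite -addrA -rmorphD /= intrN addNr addr0.
Qed.

Lemma sh_neq0 (A : {mpoly K[k]}) u : A != 0 -> A \mPo sh u != 0.
Proof.
move=> nA; apply/eqP => h; move: (sh_inv A u); rewrite h comp_mpoly0 => h0.
by rewrite -h0 eqxx in nA.
Qed.

Variable f : zvec k -> K.

Definition good (w : zvec k) := exists Q : {mpoly K[k]}, Q != 0 /\
  forall z, zeval Q z != 0 -> f z != 0 -> f (zadd z w) != 0.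

Lemma zaddA (a b c : zvec k) : zadd (zadd a b) c = zadd a (zadd b c).
Proof. by apply: functional_extensionality => i; rewrite /zadd addrA. Qed.

Lemma good_add w1 w2 : good w1 -> good w2 -> good (zadd w1 w2).
Proof.
move=> [Q1 [n1 h1]] [Q2 [n2 h2]]; exists (Q1 * (Q2 \mPo sh w1)); split.
  by rewrite mulf_neq0 // sh_neq0.
move=> z; rewrite /zeval mevalM mulf_eq0 negb_or => /andP [q1 q2] fz.
rewrite -zaddA; apply: h2; last by apply: h1.
by move: q2; rewrite -/(zeval _ _) zeval_sh.
Qed.

Lemma good0 : good (fun _ => 0).
Proof.
exists 1; split; first by rewrite oner_neq0.
move=> z _; suff -> : zadd z (fun _ => 0) = z by [].
by apply: functional_extensionality => i; rewrite /zadd addr0.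
Qed.

Hypothesis hf : hypergeometric_term f.

Lemma good_unit i : good (zunit i).
Proof.
have [A [B [nA [nB h]]]] := hf i.
exists A; split => // z az fz; apply/eqP => e.
by move: (h z); rewrite e mulr0 => /eqP; rewrite mulf_eq0 (negbTE az) (negbTE fz).
Qed.

Lemma good_nunit i : good (fun j => - zunit i j).
Proof.
have [A [B [nA [nB h]]]] := hf i.
exists (B \mPo sh (fun j => - zunit i j)); split; first by rewrite sh_neq0.
move=> z; rewrite zeval_sh => bz fz; apply/eqP => e.
move: (h (zadd z (fun j => - zunit i j))).
rewrite e mulr0 zaddA.
have -> : zadd (fun j => - zunit i j) (zunit i) = fun _ => 0.
  by apply: functional_extensionality => j; rewrite /zadd addNr.
have -> : zadd z (fun _ => 0) = z.
  by apply: functional_extensionality => j; rewrite /zadd addr0.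
by move/esym/eqP; rewrite mulf_eq0 (negbTE bz) (negbTE fz).
Qed.

Lemma good_mul i (c : int) (w : zvec k) : good w ->
  good (fun j => w j + (i == j)%:R * c).
Proof.
case: c => n gw.
  elim: n => [|n IH].
    suff -> : (fun j => w j + (i == j)%:R * (Posz 0)) = w by [].
    by apply: functional_extensionality => j; rewrite mulr0 addr0.
  have := good_add IH (good_unit i).
  suff -> : zadd (fun j => w j + (i == j)%:R * n%:Z) (zunit i) =
    (fun j => w j + (i == j)%:R * n.+1%:Z) by [].
  apply: functional_extensionality => j; rewrite /zadd /zunit -addrA; congr (_ + _).
  by rewrite -[n.+1]addn1 PoszD mulrDr mulr1.
elim: n => [|n IH].
  have := good_add gw (good_nunit i).
  suff -> : zadd w (fun j => - zunit i j) = (fun j => w j + (i == j)%:R * Negz 0) by [].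
  apply: functional_extensionality => j; rewrite /zadd /zunit NegzE mulrN mulr1.
  by [].
have := good_add IH (good_nunit i).
suff -> : zadd (fun j => w j + (i == j)%:R * Negz n) (fun j => - zunit i j) =
    (fun j => w j + (i == j)%:R * Negz n.+1) by [].
apply: functional_extensionality => j; rewrite /zadd /zunit -addrA; congr (_ + _).
rewrite !NegzE -{2}[(i == j)%:R]mulr1 -mulrN -mulrDr; congr (_ * _).
by rewrite -opprD -[1]/(Posz 1) -PoszD addn1.
Qed.

Lemma good_all w : good w.
Proof.
suff H : forall j, (j <= k)%N -> good (fun i : 'I_k => if (i < j)%N then w i else 0).
  have := H k (leqnn k).
  suff -> : (fun i : 'I_k => if (i < k)%N then w i else 0) = w by [].
  by apply: functional_extensionality => i; rewrite ltn_ord.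
elim => [_|j IH hj].
  suff -> : (fun i : 'I_k => if (i < 0)%N then w i else 0) = fun _ => 0 by apply: good0.
  by apply: functional_extensionality => i.
have := good_mul (Ordinal hj) (w (Ordinal hj)) (IH (ltnW hj)).
suff -> : (fun j0 : 'I_k => (if (j0 < j)%N then w j0 else 0) +
    (Ordinal hj == j0)%:R * w (Ordinal hj)) =
    (fun i : 'I_k => if (i < j.+1)%N then w i else 0) by [].
apply: functional_extensionality => i; rewrite [(i < j.+1)%N]ltnS [(i <= j)%N]leq_eqVlt.
case: (eqVneq (Ordinal hj) i) => [<-|ne] /=.
  by rewrite eqxx ltnn add0r mul1r.
have -> : (i == j :> nat) = false.
  by apply/negbTE; apply: contra ne => /eqP e; apply/eqP/val_inj; rewrite /= e.
by rewrite mul0r addr0.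
Qed.

Lemma good_prod ws : exists Q : {mpoly K[k]}, Q != 0 /\
  forall z, zeval Q z != 0 -> f z != 0 -> shift_prod f ws z != 0.
Proof.
elim: ws => [|w ws [Q [nQ hQ]]].
  exists 1; split; first by rewrite oner_neq0.
  by move=> z _ _; rewrite /shift_prod big_nil oner_neq0.
have [Q1 [n1 h1]] := good_all w.
exists (Q1 * Q); split; first by rewrite mulf_neq0.
move=> z; rewrite /zeval mevalM mulf_eq0 negb_or => /andP [q1 q2] fz.
rewrite /shift_prod big_cons mulf_neq0 //; first by apply: h1.
by apply: hQ.
Qed.

End S.

Theorem lemmaB16 (K : fieldType) (k : nat) (f : zvec k -> K) (ws : seq (zvec k)) :
  hypergeometric_term f -> ~ zero_divisor f -> ~ zero_divisor (shift_prod f ws).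
Proof.
move=> hf nz [p [np hp]]; apply: nz.
have [Q [nQ hQ]] := good_prod hf ws.
exists (p * Q); split; first by rewrite mulf_neq0.
move=> z; rewrite /zeval mevalM -/(zeval p z) -/(zeval Q z).
have [->|fz] := eqVneq (f z) 0; first by rewrite mulr0.
have [->|qz] := eqVneq (zeval Q z) 0; first by rewrite mulr0 mul0r.
have := hp z; move/eqP; rewrite mulf_eq0 (negbTE (hQ z qz fz)) orbF => /eqP ->.
by rewrite !mul0r.
Qed.
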